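(* Let $\tau=\{\tau_1,\dots,\tau_n\}$ with $\tau_i=(T_i,C_i,D_i)$, $0<C_i\le D_i\le T_i$, and assume $\min_{1\le i\le n}(D_i-C_i)>0$. Let $\Pi>0$, and let $m'$ be a positive integer with $$m'\ge\frac{\sum_{i=1}^nC_i}{\min_{1\le i\le n}\{D_i-C_i\}}+n.$$ Then the MPR model $R=\langle\Pi,m'\Pi,m'\rangle$ satisfies $$\mathrm{dem}_k(A_k+D_k,m')\le\mathrm{sbf}_R(A_k+D_k)\quad\text{for all }k\in\{1,\dots,n\}\text{ and all real }A_k\ge0.$$
   Context: MPR model: $R=\langle\Pi,\Theta,m'\rangle$ with $\Pi>0$, $m'$ a positive integer and $0\le\Theta\le m'\Pi$. A supply pattern of $R$ is a piecewise-constant function $s:[0,\infty)\to\{0,\dots,m'\}$ with $\int_{j\Pi}^{(j+1)\Pi}s(t)\,dt=\Theta$ for every integer $j\ge0$. Then $$\mathrm{sbf}_R(t)=\inf\Big\{\int_{t_0}^{t_0+t}s: s\text{ a supply pattern of }R,\ t_0\ge0\Big\}.$$ Demand bound: for $t\ge0$ let $$CI_i(t)=\min\Big\{C_i,\max\Big\{0,\;t-\Big\lfloor\tfrac{t+T_i-D_i}{T_i}\Big\rfloor T_i\Big\}\Big\},\qquad W_i(t)=\Big\lfloor\tfrac{t+T_i-D_i}{T_i}\Big\rfloor C_i+CI_i(t).$$ Fix $k$ and $A\ge0$, and put $t=A+D_k$. For $i\ne k$ define $$\bar I_i=\min\{W_i(t),\,t-C_k\},\qquad \hat I_i=\min\{W_i(t)-CI_i(t),\,t-C_k\},$$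 and for $i=k$ define $$\bar I_k=\min\{W_k(t)-C_k,\,A\},\qquad \hat I_k=\min\{W_k(t)-C_k-CI_k(t),\,A\}.$$ Then $$\mathrm{dem}_k(A+D_k,m')=m'C_k+\sum_{i=1}^n\hat I_i+S,$$ where $S$ is the sum of the $m'-1$ largest values among $\{\bar I_i-\hat I_i\}_{i=1}^n$ (all of them if $n\le m'-1$; $S=0$ if $m'=1$). *)

(* Defs.v *)
From Stdlib Require Import Reals Lra List.
From Coquelicot Require Import Coquelicot.
Open Scope R_scope.

Definition rfloor (x : R) : R := IZR (Int_part x).

Definition sumn_R (n : nat) (f : nat -> R) : R :=
  fold_right Rplus 0 (map f (seq 0 n)).

(* min over indices 0..n-1 (meaningful for n >= 1) *)
Definition minn_R (n : nat) (f : nat -> R) : R :=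
  fold_right Rmin (f 0%nat) (map f (seq 1 (n - 1))).

Definition piecewise_constant (s : R -> R) : Prop :=
  forall b, 0 < b -> exists l : list R,
    forall x y, 0 <= x -> x <= y -> y <= b ->
      (forall p, In p l -> ~ (x <= p <= y)) -> s x = s y.

Definition supply_pattern (Pi Theta : R) (m : nat) (s : R -> R) : Prop :=
  piecewise_constant s /\
  (forall t, 0 <= t -> exists v : nat, (v <= m)%nat /\ s t = INR v) /\
  (forall j : nat, RInt s (INR j * Pi) (INR (S j) * Pi) = Theta).

Definition sbf (Pi Theta : R) (m : nat) (t : R) : Rbar :=
  Glb_Rbar (fun x => exists s t0, supply_pattern Pi Theta m s /\ 0 <= t0 /\
                                  x = RInt s t0 (t0 + t)).

Section Demand.
Variables (T C D : nat -> R).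

Definition CI (i : nat) (t : R) : R :=
  Rmin (C i) (Rmax 0 (t - rfloor ((t + T i - D i) / T i) * T i)).

Definition W (i : nat) (t : R) : R :=
  rfloor ((t + T i - D i) / T i) * C i + CI i t.

Definition Ibar (k : nat) (A : R) (i : nat) : R :=
  let t := A + D k in
  if Nat.eq_dec i k then Rmin (W k t - C k) A
  else Rmin (W i t) (t - C k).

Definition Ihat (k : nat) (A : R) (i : nat) : R :=
  let t := A + D k in
  if Nat.eq_dec i k then Rmin (W k t - C k - CI k t) A
  else Rmin (W i t - CI i t) (t - C k).

Fixpoint insert_desc (x : R) (l : list R) : list R :=
  match l with
  | nil => x :: nil
  | y :: l' => if Rle_dec y x then x :: y :: l' else y :: insert_desc x l'
  end.
Fixpoint sort_desc (l : list R) : list R :=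
  match l with nil => nil | x :: l' => insert_desc x (sort_desc l') end.

(* sum of the (m-1) largest values among the list (all if fewer; 0 if m = 1) *)
Definition sum_largest (q : nat) (l : list R) : R :=
  fold_right Rplus 0 (firstn q (sort_desc l)).

(* dem_k(A + D_k, m), tasks indexed 0..n-1 *)
Definition dem (n k : nat) (A : R) (m : nat) : R :=
  INR m * C k + sumn_R n (Ihat k A)
  + sum_largest (m - 1) (map (fun i => Ibar k A i - Ihat k A i) (seq 0 n)).
End Demand.

(* Main.v *)
Require Import Defs.
From Stdlib Require Import Reals List Lra Lia ZArith.
From Coquelicot Require Import Coquelicot.
Open Scope R_scope.

Lemma pc_int_aux (s : R -> R) (B : R) (L : list R) :
  (forall x y, 0 <= x -> x <= y -> y <= B ->
      (forall p, In p L -> ~ (x <= p <= y)) -> s x = s y) ->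
  forall l', forall a b, 0 <= a -> a <= b -> b <= B ->
   (forall q, In q L -> a < q < b -> In q l') -> ex_RInt s a b.
Proof.
  intros Hs l'. induction l' as [|p l' IH]; intros a b Ha Hab HbB Hq.
  - destruct (Req_dec a b) as [->|Hne]. apply ex_RInt_point.
    apply (ex_RInt_ext (fun _ => s ((a+b)/2))).
    2: apply ex_RInt_const.
    intros x Hx. rewrite Rmin_left in Hx by lra. rewrite Rmax_right in Hx by lra.
    assert (K: forall u v, a < u -> u <= v -> v < b -> s u = s v).
    { intros u v Hu Huv Hv. apply Hs; try lra.
      intros p Hp Hp'. specialize (Hq p Hp). simpl in Hq. apply Hq. lra. }
    destruct (Rle_dec x ((a+b)/2)).
    + symmetry. apply K; lra.
    + apply K; lra.
  - destruct (Rlt_dec a p) as [Hap|Hap]; [destruct (Rlt_dec p b) as [Hpb|Hpb]|].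
    + apply ex_RInt_Chasles with p.
      * apply IH; try lra. intros q Hq1 Hq2. destruct (Hq q Hq1) as [->|]; auto; lra.
      * apply IH; try lra. intros q Hq1 Hq2. destruct (Hq q Hq1) as [->|]; auto; lra.
    + apply IH; auto. intros q Hq1 Hq2. destruct (Hq q Hq1) as [->|]; auto; lra.
    + apply IH; auto. intros q Hq1 Hq2. destruct (Hq q Hq1) as [->|]; auto; lra.
Qed.

Lemma pc_int (s : R -> R) : piecewise_constant s ->
  forall a b, 0 <= a -> a <= b -> ex_RInt s a b.
Proof.
  intros Hpc a b Ha Hab.
  destruct (Rle_lt_dec b 0). { replace b with a by lra. apply ex_RInt_point. }
  destruct (Hpc b r) as [L HL].
  apply (pc_int_aux s b L HL L); auto; lra.
Qed.

Lemma supply_lower (Pi : R) (m : nat) (s : R -> R) t0 t :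
  0 < Pi -> supply_pattern Pi (INR m * Pi) m s -> 0 <= t0 -> 0 <= t ->
  INR m * t <= RInt s t0 (t0 + t).
Proof.
  intros HPi [Hpc [Hv Hint]] Ht0 Ht.
  assert (Hle: forall x, 0 <= x -> s x <= INR m).
  { intros x Hx. destruct (Hv x Hx) as [v [Hvm ->]]. apply le_INR; auto. }
  set (r := (t0 + t) / Pi).
  destruct (archimed r) as [Hu _].
  assert (Hr: 0 <= r) by (unfold r; apply Rdiv_le_0_compat; lra).
  set (N := Z.to_nat (up r)).
  assert (HN: INR N = IZR (up r)).
  { unfold N. rewrite INR_IZR_INZ, Z2Nat.id; auto. apply le_IZR. lra. }
  assert (HNb: t0 + t <= INR N * Pi).
  { rewrite HN. unfold r in Hu. apply Rlt_le. 
    apply (Rmult_lt_compat_r Pi) in Hu; auto.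
    replace ((t0 + t) / Pi * Pi) with (t0 + t) in Hu by (field; lra). exact Hu. }
  assert (Hsum: forall j, RInt s 0 (INR j * Pi) = INR j * (INR m * Pi)).
  { induction j.
    - simpl. rewrite Rmult_0_l. rewrite RInt_point. unfold zero; simpl. ring.
    - rewrite <- (RInt_Chasles s 0 (INR j * Pi)).
      + rewrite IHj, Hint. rewrite S_INR. unfold plus; simpl. ring.
      + apply pc_int; auto; try lra. apply Rmult_le_pos; [apply pos_INR|lra].
      + pose proof (pos_INR j). apply pc_int; auto. apply Rmult_le_pos; lra.
        rewrite S_INR. nra. }
  specialize (Hsum N).
  assert (E1: ex_RInt s 0 t0) by (apply pc_int; auto; lra).
  assert (E2: ex_RInt s t0 (t0+t)) by (apply pc_int; auto; lra).
  assert (E3: ex_RInt s (t0+t) (INR N * Pi)) by (apply pc_int; auto; lra).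
  rewrite <- (RInt_Chasles s 0 t0) in Hsum; auto.
  2: apply ex_RInt_Chasles with (t0+t); auto.
  rewrite <- (RInt_Chasles s t0 (t0+t)) in Hsum; auto.
  unfold plus in Hsum; simpl in Hsum.
  assert (B1: RInt s 0 t0 <= INR m * t0).
  { replace (INR m * t0) with (RInt (fun _ => INR m) 0 t0).
    apply RInt_le; auto; try lra. apply ex_RInt_const. intros; apply Hle; lra.
    rewrite RInt_const. unfold scal; simpl. unfold mult; simpl. ring. }
  assert (B3: RInt s (t0+t) (INR N * Pi) <= INR m * (INR N * Pi - (t0+t))).
  { replace (INR m * (INR N * Pi - (t0+t))) with (RInt (fun _ => INR m) (t0+t) (INR N * Pi)).
    apply RInt_le; auto; try lra. apply ex_RInt_const. intros; apply Hle; lra.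
    rewrite RInt_const. unfold scal; simpl. unfold mult; simpl. ring. }
  nra.
Qed.

Definition sumL (l : list R) := fold_right Rplus 0 l.

Lemma insert_sum x l : sumL (insert_desc x l) = x + sumL l.
Proof. induction l as [|y l IH]; simpl; auto. destruct (Rle_dec y x); simpl; auto.
  unfold sumL in *. rewrite IH. ring. Qed.

Lemma sort_sum l : sumL (sort_desc l) = sumL l.
Proof. induction l as [|y l IH]; simpl; auto. rewrite insert_sum, IH. reflexivity. Qed.

Lemma insert_nn x l : 0 <= x -> List.Forall (fun y => 0 <= y) l -> List.Forall (fun y => 0 <= y) (insert_desc x l).
Proof. intros Hx. induction l as [|y l IH]; simpl; intros H; auto.
  inversion H; subst. destruct (Rle_dec y x); auto. Qed.

Lemma sort_nn l : List.Forall (fun y => 0 <= y) l -> List.Forall (fun y => 0 <= y) (sort_desc l).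
Proof. induction l as [|y l IH]; simpl; intros H; auto. inversion H; subst.
  apply insert_nn; auto. Qed.

Lemma firstn_le q l : List.Forall (fun y => 0 <= y) l -> sumL (firstn q l) <= sumL l.
Proof. revert q; induction l as [|y l IH]; intros q H; destruct q; simpl; try lra.
  - inversion H; subst. pose proof (IH 0%nat H3). simpl in *. unfold sumL in *. simpl in *. lra.
  - inversion H; subst. specialize (IH q H3). unfold sumL in *. lra. Qed.

Lemma sum_largest_le q l : List.Forall (fun y => 0 <= y) l -> sum_largest q l <= sumL l.
Proof. intros H. unfold sum_largest. rewrite <- (sort_sum l). apply firstn_le, sort_nn; auto. Qed.

Lemma sum_map_add (f g : nat -> R) l : sumL (map f l) + sumL (map g l) = sumL (map (fun i => f i + g i) l).
Proof. induction l; simpl; auto. ring. unfold sumL in *. simpl. rewrite <- IHl. ring. Qed.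

Lemma sum_map_bound (f : nat -> R) c l : (forall i, In i l -> f i <= c) -> sumL (map f l) <= INR (length l) * c.
Proof. induction l; intros H; simpl. lra. unfold sumL in *. simpl. idtac.
  specialize (IHl (fun i Hi => H i (or_intror Hi))). specialize (H a (or_introl eq_refl)). destruct (length l); simpl in *; lra. Qed.

Lemma dem_bound n T C D k A m :
  (forall i, (i < n)%nat -> 0 < C i /\ C i <= D i /\ D i <= T i) ->
  (n <= m)%nat -> (k < n)%nat -> 0 <= A ->
  dem T C D n k A m <= INR m * (A + D k).
Proof.
  intros HC Hnm Hk HA. unfold dem, sumn_R.
  pose proof (HC k Hk) as [Ck [CDk DTk]].
  set (l := seq 0 n).
  assert (Hd: forall i, In i l -> 0 <= Ibar T C D k A i - Ihat T C D k A i).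
  { intros i Hi. unfold l in Hi. apply in_seq in Hi. destruct (HC i ltac:(lia)) as [Ci _].
    assert (0 <= CI T C D i (A + D k)).
    { unfold CI. apply Rmin_glb; [lra|apply Rmax_l]. }
    unfold Ibar, Ihat. destruct Nat.eq_dec.
    - subst. unfold Rmin. repeat destruct Rle_dec; lra.
    - unfold Rmin. repeat destruct Rle_dec; lra. }
  assert (Hb: forall i, In i l -> Ibar T C D k A i <= A + D k - C k).
  { intros i Hi. unfold Ibar. destruct Nat.eq_dec.
    - pose proof (Rmin_r (W T C D k (A + D k) - C k) A). lra.
    - apply Rmin_r. }
  pose proof (sum_largest_le (m-1) (map (fun i => Ibar T C D k A i - Ihat T C D k A i) l)) as S1.
  assert (Fa: List.Forall (fun y => 0 <= y) (map (fun i => Ibar T C D k A i - Ihat T C D k A i) l)).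
  { apply List.Forall_forall. intros y Hy. apply in_map_iff in Hy. destruct Hy as [i [<- Hi]]. auto. }
  specialize (S1 Fa).
  pose proof (sum_map_add (Ihat T C D k A) (fun i => Ibar T C D k A i - Ihat T C D k A i) l) as S2.
  pose proof (sum_map_bound (fun i => Ihat T C D k A i + (Ibar T C D k A i - Ihat T C D k A i)) (A + D k - C k) l) as S3.
  assert (S3': sumL (map (fun i => Ihat T C D k A i + (Ibar T C D k A i - Ihat T C D k A i)) l) <= INR (length l) * (A + D k - C k)).
  { apply S3. intros i Hi. specialize (Hb i Hi). lra. }
  unfold l in S3'. rewrite length_seq in S3'. fold l in S3'.
  apply le_INR in Hnm. unfold sumL in *.
  assert (INR n * (A + D k - C k) <= INR m * (A + D k - C k)).
  { apply Rmult_le_compat_r; lra. }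
  lra.
Qed.

Lemma sum_nn (f : nat -> R) l : (forall i, In i l -> 0 <= f i) -> 0 <= sumL (map f l).
Proof. induction l; intros H; simpl. lra. unfold sumL in *. simpl.
  specialize (IHl (fun i Hi => H i (or_intror Hi))). specialize (H a (or_introl eq_refl)). lra. Qed.

Theorem lemma3 (n : nat) (T C D : nat -> R) (Pi : R) (m : nat) :
  (0 < n)%nat ->
  (forall i, (i < n)%nat -> 0 < C i /\ C i <= D i /\ D i <= T i) ->
  0 < minn_R n (fun i => D i - C i) ->
  0 < Pi ->
  (0 < m)%nat ->
  INR m >= sumn_R n C / minn_R n (fun i => D i - C i) + INR n ->
  forall k (A : R), (k < n)%nat -> 0 <= A ->
    Rbar_le (Finite (dem T C D n k A m)) (sbf Pi (INR m * Pi) m (A + D k)).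
Proof.
  intros Hn HC Hmin HPi Hm Hmn k A Hk HA.
  assert (Hs: 0 <= sumn_R n C).
  { apply sum_nn. intros i Hi. apply in_seq in Hi. destruct (HC i ltac:(lia)); lra. }
  assert (Hq: 0 <= sumn_R n C / minn_R n (fun i => D i - C i)).
  { apply Rdiv_le_0_compat; lra. }
  assert (Hnm: (n <= m)%nat) by (apply INR_le; lra).
  pose proof (dem_bound n T C D k A m HC Hnm Hk HA) as Hd.
  pose proof (HC k Hk) as [Ck [CDk _]].
  unfold sbf. apply (proj2 (Glb_Rbar_correct _)).
  intros x [s [t0 [Hsp [Ht0 ->]]]]. simpl.
  pose proof (supply_lower Pi m s t0 (A + D k) HPi Hsp Ht0 ltac:(lra)). lra.
Qed.
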